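(* Let $N$ be a node and let $f_N^{1}\le f_N^{2}\le\dots\le f_N^{|\Gamma|}$ be the ordered list of the scan periods set for $N$ by the monitors $M_1,\dots,M_{|\Gamma|}$. Then the longest time frame during which an error concerning a connection of $N$ (a connection $N\to P$ present in $E$ but absent from $E_{AToM}$, or vice versa) can exist in the global snapshot $G_{AToM}$ is $f_N^{\lfloor|\Gamma|/2\rfloor+1}$.
   Context: The network is a directed graph $G=(V,E)$ of nodes that changes over time ($N\to P$ denotes $(N,P)\in E$); $\Gamma$ is a set of monitors. Each monitor $M_i$ repeatedly executes a verification round $PeeV(N)$ for each node $N$, treated as an atomic event, which updates its local snapshot $E_{M_i}$ so that immediately after the round, $(N,P)\in E_{M_i}$ iff $(N,P)\in E$ for all $P$; consecutive rounds of $M_i$ for $N$ are separated by the scan period $f_N^{i}$. Between rounds, $E_{M_i}$ is not modified for connections of $N$. The global snapshot is $G_{AToM}=(V,E_{AToM})$ with $E_{AToM}=\{(A,B):|\{M\in\Gamma:(A,B)\in E_M\}|>|\Gamma|/2\}$, i.e. a connection is included iff it is in the local snapshots of a strict majority of monitors. *)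

(* Defs.v *)
From HB Require Import structures.
From mathcomp Require Import all_boot all_order all_algebra.
From mathcomp Require Import reals.
Set Implicit Arguments. Unset Strict Implicit. Unset Printing Implicit Defensive.
Import Order.TTheory GRing.Theory Num.Theory.
Local Open Scope ring_scope.

(* Model (time is real-valued, R : realType).
   - monitors are indexed by 'I_m (m = |Gamma|);
   - f i > 0 : scan period of monitor i for the fixed node N;
   - phi i  : phase of monitor i; the verification rounds PeeV(N) of monitor i
              happen exactly at the times phi i + z * f i, z : int;
   - E : R -> rel V : the (time-varying) true connection relation;
   - the local snapshot of monitor i at time t for a connection (N,P) equals
     E s N P where s is the time of the last round of i at or before t. *)

Section AToM.
Variables (R : realType) (V : Type) (m : nat).

Definition last_round (ph p t : R) : R :=
  ph + (Num.floor ((t - ph) / p))%:~R * p.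

Definition local_snap (E : R -> rel V) (phi f : 'I_m -> R) (i : 'I_m)
  (t : R) (N P : V) : bool :=
  E (last_round (phi i) (f i) t) N P.

Definition in_AToM (E : R -> rel V) (phi f : 'I_m -> R) (t : R) (N P : V)
  : bool :=
  (m < 2 * #|[set i : 'I_m | local_snap E phi f i t N P]|)%N.

Definition atom_error (E : R -> rel V) (phi f : 'I_m -> R) (t : R) (N P : V)
  : bool :=
  in_AToM E phi f t N P != E t N P.

(* the (floor(m/2)+1)-th smallest scan period, i.e. f_N^{floor(|Gamma|/2)+1}
   in the ordered list f_N^1 <= ... <= f_N^{|Gamma|} *)
Definition kth_period (f : 'I_m -> R) : R :=
  nth 0 (sort <=%R [seq f i | i <- enum 'I_m]) m./2.

End AToM.

(* Main.v *)
Require Import Defs.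
From HB Require Import structures.
From mathcomp Require Import all_boot all_order all_algebra.
From mathcomp Require Import reals zify lra.
Import Order.TTheory GRing.Theory Num.Theory.
Set Implicit Arguments. Unset Strict Implicit.
Local Open Scope ring_scope.

Lemma half_facts m : (m./2 + m./2 <= m)%N /\ (m < m./2 + m./2 + 2)%N.
Proof. have := odd_double_half m; rewrite -addnn; case: (odd m) => /= <-; lia. Qed.

Lemma card_count (R : realType) m (f : 'I_m -> R) (a : pred R) :
  #|[set i | a (f i)]| = count a (sort <=%R [seq f i | i <- enum 'I_m]).
Proof.
rewrite (permP (permEl (perm_sort _ _))) count_map cardsE cardE /enum_mem size_filter.
by rewrite filter_predT.
Qed.

Lemma sorted_s (R : realType) m (f : 'I_m -> R) :
  sorted <=%R (sort <=%R [seq f i | i <- enum 'I_m]).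
Proof. apply: sort_sorted => x y; exact: le_total. Qed.

Lemma size_s (R : realType) m (f : 'I_m -> R) :
  size (sort <=%R [seq f i | i <- enum 'I_m]) = m.
Proof. by rewrite size_sort size_map size_enum_ord. Qed.

Lemma C1 (R : realType) m (f : 'I_m -> R) (hm : (0 < m)%N) :
  (#|[set i | (f i < kth_period f)%R]| <= m./2)%N.
Proof.
rewrite (@card_count _ _ f (fun x => x < kth_period f)) /kth_period.
set s := sort _ _.
have ss := sorted_s f; have zs := size_s f; rewrite -/s in ss zs.
set F := nth 0 s m./2.
rewrite -(cat_take_drop m./2 s) count_cat.
have -> : count (fun x => x < F) (drop m./2 s) = 0%N.
  apply/eqP; rewrite -leqn0 leqNgt -has_count; apply/hasPn => x /(nthP 0) [j hj <-].
  rewrite nth_drop -leNgt; apply: (sorted_leq_nth le_trans le_refl) => //.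
  - have [h1 h2] := half_facts m; rewrite inE zs; lia.
  - rewrite inE zs; rewrite size_drop zs in hj; lia.
  - lia.
rewrite addn0; apply: leq_trans (count_size _ _) _.
rewrite size_take zs; have := half_facts m; case: ifP => // /negbT; rewrite -leqNgt; lia.
Qed.

Lemma C2 (R : realType) m (f : 'I_m -> R) (hm : (0 < m)%N) :
  (m./2 + 1 <= #|[set i | (f i <= kth_period f)%R]|)%N.
Proof.
rewrite (@card_count _ _ f (fun x => x <= kth_period f)) /kth_period.
set s := sort _ _.
have ss := sorted_s f; have zs := size_s f; rewrite -/s in ss zs.
set F := nth 0 s m./2.
have [h1 h2] := half_facts m.
rewrite -(cat_take_drop (m./2 + 1) s) count_cat.
apply: leq_trans (leq_addr _ _).
have -> : count (fun x => x <= F) (take (m./2 + 1) s) = size (take (m./2 + 1) s).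
  apply/eqP; rewrite -all_count; apply/allP => x /(nthP 0) [j hj <-].
  rewrite size_take zs in hj.
  have hj' : (j < m./2 + 1)%N by move: hj; case: ifP => // /negbT; rewrite -leqNgt; lia.
  rewrite nth_take //; apply: (sorted_leq_nth le_trans le_refl) => //.
  - rewrite inE zs; lia.
  - rewrite inE zs; lia.
  - lia.
rewrite size_take zs; case: ifP => // /negbT; rewrite -leqNgt; lia.
Qed.

Section LR.
Variables (R : realType) (ph p : R).
Hypothesis hp : 0 < p.

Definition lr t := last_round ph p t.
Definition isr (s : R) := exists z : int, s = ph + z%:~R * p.

Lemma lr_isr t : isr (lr t).
Proof. by exists (Num.floor ((t - ph) / p)). Qed.

Lemma lr_le t : lr t <= t.
Proof.
rewrite /lr /last_round -lerBrDl -ler_pdivlMr //; exact: Num.Theory.floor_le.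
Qed.

Lemma lr_gt t : t < lr t + p.
Proof.
rewrite /lr /last_round; set z := Num.floor _.
have := floor_itv ((t - ph) / p); rewrite -/z intrD => /andP[_].
rewrite ltr_pdivrMr // mulrDl mul1r; lra.
Qed.

Lemma isr_le_lr s t : isr s -> s <= t -> s <= lr t.
Proof.
move=> [z ->] hst; rewrite /lr /last_round lerD2l ler_pM2r //.
rewrite ler_int floor_ge_int ler_pdivlMr //; lra.
Qed.

Lemma lr_mono t t' : t <= t' -> lr t <= lr t'.
Proof. move=> h; apply: isr_le_lr; [exact: lr_isr | exact: le_trans (lr_le t) h]. Qed.

Lemma lr_isr_id s : isr s -> lr s = s.
Proof.
move=> [z ->]; rewrite /lr /last_round.
have -> : ph + z%:~R * p - ph = z%:~R * p by lra.
rewrite mulfK ?gt_eqF //.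
by rewrite intrKfloor.
Qed.

Lemma isr_eq s s' : isr s -> isr s' -> s <= s' -> s' - s < p -> s = s'.
Proof.
move=> [z ->] [z' ->] h1 h2.
have e1 : z%:~R <= z'%:~R :> R by rewrite -(ler_pM2r hp); lra.
have e2 : z'%:~R < z%:~R + 1 :> R.
  by rewrite -(ltr_pM2r hp) mulrDl mul1r; lra.
rewrite ler_int in e1; have e3 : (z%:~R + 1 = (z + 1)%:~R :> R) by rewrite intrD.
rewrite e3 ltr_int in e2.
by have -> : z = z' by lia.
Qed.

Lemma lr_const t u : t <= u -> lr u <= t -> lr t = lr u.
Proof.
move=> h1 h2; apply/eqP; rewrite eq_le lr_mono //.
exact: isr_le_lr (lr_isr u) h2.
Qed.

End LR.

Lemma countA m (A B : {set 'I_m}) :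
  (forall i, (i \in B) = (i \in A) \/ (i \in B) = ~~ (m < 2 * #|B|)%N) ->
  (m < 2 * #|A|)%N = (m < 2 * #|B|)%N.
Proof.
move=> H; case hB: (m < 2 * #|B|)%N.
- have : B \subset A.
    apply/subsetP => i iB; case: (H i) => e; first by rewrite -e.
    by rewrite iB hB in e.
  move/subset_leq_card; lia.
- have : A \subset B.
    apply/subsetP => i iA; case: (H i) => e; first by rewrite e.
    by rewrite e hB.
  move/subset_leq_card; lia.
Qed.

Lemma seq_min (R : realType) (s : seq R) x : x \in s ->
  exists2 y, y \in s & forall z, z \in s -> y <= z.
Proof.
elim: s x => // c s IH x; rewrite inE => _.
case: s IH => [|d s] IH.
  by exists c => [|z]; rewrite ?inE // => /eqP ->.
have [y ys hy] := IH d (mem_head _ _).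
case: (leP c y) => hc.
- exists c; first exact: mem_head.
  move=> z; rewrite inE => /orP[/eqP -> //|/hy]; exact: le_trans.
- exists y; first by rewrite inE ys orbT.
  move=> z; rewrite inE => /orP[/eqP -> |/hy //]; exact: ltW.
Qed.

Lemma seq_max (R : realType) (s : seq R) x : x \in s ->
  exists2 y, y \in s & forall z, z \in s -> z <= y.
Proof.
elim: s x => // c s IH x; rewrite inE => _.
case: s IH => [|d s] IH.
  by exists c => [|z]; rewrite ?inE // => /eqP ->.
have [y ys hy] := IH d (mem_head _ _).
case: (leP y c) => hc.
- exists c; first exact: mem_head.
  move=> z; rewrite inE => /orP[/eqP -> //|/hy h]; exact: le_trans h hc.
- exists y; first by rewrite inE ys orbT.
  move=> z; rewrite inE => /orP[/eqP -> |/hy //]; exact: ltW.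
Qed.

Section Main.
Variables (R : realType) (V : Type) (N : V) (m : nat) (f : 'I_m -> R).
Hypothesis hm : (0 < m)%N.
Hypothesis hf : forall i, 0 < f i.
Variables (E : R -> rel V) (phi : 'I_m -> R) (P : V) (a b : R).
Hypothesis herr : forall t, a < t < b -> atom_error E phi f t N P.

Let snap i t := local_snap E phi f i t N P.
Let h t := in_AToM E phi f t N P.
Let L i t := lr (phi i) (f i) t.

Lemma KF i t : a < t < b -> isr (phi i) (f i) t -> snap i t = ~~ h t.
Proof.
move=> ht hr; have := herr ht; rewrite /atom_error /snap /h /local_snap.
rewrite -/(lr _ _ _) lr_isr_id //.
by case: (in_AToM _ _ _ _ _ _); case: (E t N P).
Qed.

Lemma LOC t t' : a < t -> t <= t' -> t' < b -> (forall i, t' - t < f i) ->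
  h t = h t'.
Proof.
move=> hat tt t'b hd.
set D := [seq d <- t :: t' :: [seq L i t' | i <- enum 'I_m] | t <= d].
have Drange : forall d, d \in D -> t <= d <= t'.
  move=> d; rewrite mem_filter => /andP[-> /=]; rewrite !inE.
  case/or3P => [/eqP -> //|/eqP -> //|/mapP [i _ ->]]; exact: lr_le.
have tD : t \in D by rewrite mem_filter lexx mem_head.
have t'D : t' \in D by rewrite mem_filter tt !inE eqxx orbT.
suff allD : forall u, u \in D -> h u = h t by rewrite (allD _ t'D).
move=> u0 u0D; have [//|hu0] := eqVneq (h u0) (h t); exfalso.
have := @seq_min R [seq u <- D | h u != h t] u0.
rewrite mem_filter hu0 u0D => /(_ isT) [u ubad umin].
move: ubad; rewrite mem_filter => /andP[hu uD].
have tu : t < u.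
  have /andP[h1 _] := Drange _ uD; rewrite lt_neqAle h1 andbT.
  by apply/eqP => e; rewrite e eqxx in hu.
have := @seq_max R [seq d <- D | d < u] t.
rewrite mem_filter tu tD => /(_ isT) [pp ppl ppmax].
move: ppl; rewrite mem_filter => /andP[ppu ppD].
have hpp : h pp = h t.
  have [//|hn] := eqVneq (h pp) (h t); exfalso.
  have := umin pp; rewrite mem_filter hn ppD => /(_ isT) hle.
  by move: (lt_le_trans ppu hle); rewrite ltxx.
have /andP[tpp _] := Drange _ ppD.
have /andP[_ ut'] := Drange _ uD.
have : h pp = h u.
  rewrite /h /in_AToM; apply: countA => i; rewrite !inE.
  case: (leP (L i u) pp) => hL.
  - left; rewrite /local_snap -/(lr _ _ _) -/(L i u) -/(lr _ _ _) -/(L i pp).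
    by rewrite /L (lr_const (hf i) (ltW ppu) hL).
  - right.
    have eqL : L i u = L i t'.
      apply: (isr_eq (hf i)); [exact: lr_isr|exact: lr_isr|exact: (lr_mono _ (hf i))|].
      have := lr_le (phi i) (hf i) t'; have := hd i; rewrite /L in hL *; lra.
    have LD : L i u \in D.
      rewrite mem_filter (le_trans tpp (ltW hL)) /= eqL !inE.
      by rewrite (map_f (fun i => L i t') (mem_enum _ i)) !orbT.
    have Lu : L i u = u.
      apply/eqP; rewrite eq_le; apply/andP; split; first exact: (lr_le _ (hf i)).
      rewrite leNgt; apply/negP => hlt.
      have := ppmax (L i u); rewrite mem_filter hlt LD => /(_ isT).
      by rewrite leNgt hL.
    have hk : snap i u = ~~ h u.
      apply: KF; first by rewrite (lt_trans hat tu) (le_lt_trans ut' t'b).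
      by rewrite -Lu; exact: lr_isr.
    exact: hk.
by rewrite hpp => e; rewrite e eqxx in hu.
Qed.

Lemma HC t t' : a < t -> t <= t' -> t' < b -> h t = h t'.
Proof.
have := @seq_min R [seq f i | i <- enum 'I_m] (f (Ordinal hm)).
rewrite (map_f f (mem_enum _ _)) => /(_ isT) [d /mapP [i0 _ ->] dmin].
have d0 := hf i0.
have dle : forall i, f i0 <= f i by move=> i; apply: dmin; exact: map_f (mem_enum _ _).
have CH : forall n : nat, forall t1 t2, a < t1 -> t1 <= t2 -> t2 < b ->
    t2 - t1 <= n%:R * (f i0 / 2) -> h t1 = h t2.
  elim=> [|n IH] t1 t2 h1 h2 h3 h4.
  - rewrite mul0r in h4; have -> : t2 = t1 by lra.
    by [].
  - have hn : 0 <= n%:R * (f i0 / 2) by apply: mulr_ge0; [exact: ler0n|lra].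
    rewrite -addn1 natrD mulrDl mul1r in h4.
    case: (leP (t2 - t1) (n%:R * (f i0 / 2))) => hc; first exact: IH.
    rewrite (IH t1 (t1 + n%:R * (f i0 / 2))) //; try lra.
    apply: LOC; try lra.
    move=> i; have := dle i; lra.
move=> h1 h2 h3.
have hx : 0 <= (t' - t) / (f i0 / 2) by apply: divr_ge0; lra.
have [n hn] : exists n : nat, (t' - t) / (f i0 / 2) < n%:R.
  by exists (Num.bound ((t' - t) / (f i0 / 2))); exact: archi_boundP.
apply: (CH n) => //; rewrite ltr_pdivrMr in hn; lra.
Qed.

Lemma part1 : b - a <= kth_period f.
Proof.
rewrite leNgt; apply/negP => hF.
set F := kth_period f in hF.
set K := [set i | f i <= F].
have cK := C2 f hm; rewrite -/F -/K in cK.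
have [i0 i0K] : exists i0, i0 \in K.
  apply/set0Pn; rewrite -card_gt0; lia.
set r := fun i => L i a + f i.
have risr : forall i, isr (phi i) (f i) (r i).
  move=> i; have [z ez] := lr_isr (phi i) (f i) a.
  exists (z + 1); rewrite /r /L ez intrD mulrDl mul1r; lra.
have ra : forall i, a < r i by move=> i; exact: lr_gt (hf i) a.
have rb : forall i, i \in K -> r i < b.
  move=> i; rewrite inE => hi; have := lr_le (phi i) (hf i) a; rewrite /r /L; lra.
have m0 : r i0 \in [seq r i | i <- enum K] by apply: map_f; rewrite mem_enum.
have [T /mapP [j jK ->] Tmax] := seq_max m0.
rewrite mem_enum in jK.
have hT : a < r j < b by rewrite ra rb.
have key : forall i, i \in K -> snap i (r j) = ~~ h (r j).
  move=> i iK.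
  have ri : r i <= r j by apply: Tmax; apply: map_f; rewrite mem_enum.
  have s1 : r i <= L i (r j) by have := isr_le_lr (hf i) (risr i) ri.
  have s2 : L i (r j) <= r j by have := lr_le (phi i) (hf i) (r j).
  have hs : a < L i (r j) < b.
    by apply/andP; split; [exact: lt_le_trans (ra i) s1|exact: le_lt_trans s2 (rb j jK)].
  have e : h (L i (r j)) = h (r j).
    by apply: HC; [by case/andP: hs|exact: s2|by case/andP: hT].
  have := KF hs (lr_isr (phi i) (f i) (r j)).
  rewrite e.
  rewrite /snap /local_snap -/(lr _ _ _) -/(L i (r j)) => <-.
  by rewrite /L (lr_isr_id (hf i) (lr_isr _ _ _)).
have [h1 h2] := half_facts m.
move: key; rewrite /snap /h /in_AToM.
set S := [set i | local_snap E phi f i (r j) N P].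
case hS: (m < 2 * #|S|)%N => /= key.
- have : S \subset ~: K.
    apply/subsetP => i; rewrite inE in_setC => iS; apply/negP => iK.
    by have := key i iK; rewrite iS.
  move/subset_leq_card; have := cardsC K; rewrite card_ord.
  have hS2 : (m < 2 * #|S|)%N by rewrite hS.
  lia.
- have : K \subset S.
    by apply/subsetP => i iK; rewrite inE key.
  have hS2 : (2 * #|S| <= m)%N by rewrite leqNgt hS.
  move/subset_leq_card; lia.
Qed.

End Main.

Lemma isr0 (R : realType) (p s : R) : 0 < p -> isr 0 p s -> 0 < s -> p <= s.
Proof.
move=> hp [z ->]; rewrite add0r pmulr_lgt0 // => hz.
rewrite -ler_pdivrMr // divff ?gt_eqF //.
have : (0 < z)%R by rewrite -(ltr_int R) .
by move=> hz'; rewrite -[1]/(1%:~R) ler_int; lia.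
Qed.

Theorem theorem3 (R : realType) (V : Type) (N : V) (m : nat)
    (f : 'I_m -> R) (hm : (0 < m)%N) (hf : forall i, 0 < f i) :
  (* no error on a connection of N can persist longer than f^{floor(m/2)+1} *)
  (forall (E : R -> rel V) (phi : 'I_m -> R) (P : V) (a b : R),
      (forall t, a < t < b -> atom_error E phi f t N P) ->
      b - a <= kth_period f) /\
  (* and this duration is attained *)
  (forall P : V, exists (E : R -> rel V) (phi : 'I_m -> R) (a b : R),
      b - a = kth_period f /\
      forall t, a < t < b -> atom_error E phi f t N P).
Proof.
split.
  move=> E phi P a b herr; exact: (part1 hm hf herr).
move=> P; set F := kth_period f.
exists (fun t : R => fun (_ _ : V) => (0 < t) && (t < F)), (fun _ => 0), 0, F.
split; first by rewrite subr0.
move=> t ht; rewrite /atom_error /= ht /in_AToM.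
have c1 := C1 f hm; rewrite -/F in c1.
have : [set i | local_snap (fun t0 : R => fun (_ _ : V) => (0 < t0) && (t0 < F))
   (fun _ => 0) f i t N P] \subset [set i | f i < F].
  apply/subsetP => i; rewrite !inE /local_snap => /andP [h0 _].
  have := isr0 (hf i) (lr_isr 0 (f i) t) h0.
  have := lr_le 0 (hf i) t; case/andP: ht => _; rewrite /lr; lra.
move/subset_leq_card => hc; have [h1 h2] := half_facts m.
case: ltnP => // hh; exfalso; have := leq_trans hc c1.
move: hh; set X := #|_|; move=> hh hX. lia.
Qed.
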